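(* Let $\alpha, \beta, \gamma, a, b$ be integers such that $p = \alpha^2 a^2 + 2\beta a b + \gamma b^2$ is a prime number, and put $m = \alpha^2\gamma - \beta^2$. Then: (i) the conic $p x^2 - m y^2 = z^2$ has the rational point $(x,y,z) = (\alpha, b, \alpha^2 a + \beta b)$, and hence infinitely many rational points (pairwise non-proportional nonzero rational solutions $(x,y,z)$); (ii) if, in addition, $m$ is a prime with $m \equiv 1 \pmod 8$ and $\alpha$ is a prime with $\alpha \equiv 3 \pmod 4$, then the equation $p x^4 - m y^4 = z^2$ has no rational solutions other than $x=y=z=0$. *)

(* Defs.v *)
From mathcomp Require Import all_boot all_order all_algebra.
Set Implicit Arguments. Unset Strict Implicit. Unset Printing Implicit Defensive.
Import Order.TTheory GRing.Theory Num.Theory.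
Local Open Scope ring_scope.

Definition zprime (z : int) : bool := (0 < z) && prime `|z|%N.

Definition proportional (u v : rat * rat * rat) : Prop :=
  exists l : rat, v.1.1 = l * u.1.1 /\ v.1.2 = l * u.1.2 /\ v.2 = l * u.2.

Definition nonzero3 (u : rat * rat * rat) : Prop :=
  ~ (u.1.1 = 0 /\ u.1.2 = 0 /\ u.2 = 0).

Definition on_conic (c1 c2 : int) (u : rat * rat * rat) : Prop :=
  c1%:~R * u.1.1 ^+ 2 - c2%:~R * u.1.2 ^+ 2 = u.2 ^+ 2.

Definition infinitely_many_points (c1 c2 : int) : Prop :=
  exists f : nat -> rat * rat * rat,
    (forall n, nonzero3 (f n) /\ on_conic c1 c2 (f n)) /\
    (forall i j, i <> j -> ~ proportional (f i) (f j)).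

(* Main.v *)
Require Import Defs.
From mathcomp Require Import all_boot all_order all_algebra.
From mathcomp Require Import zify ring lra.
Import Order.TTheory GRing.Theory Num.Theory.


Lemma sq8 (u : nat) : (u %% 2 = 1)%N -> (u^2 %% 8 = 1)%N.
Proof.
move=> h.
have := divn_eq u 8; set q := (u %/ 8)%N; set r := (u %% 8)%N => Hu.
have : (r = 1 \/ r = 3 \/ r = 5 \/ r = 7)%N by lia.
rewrite Hu; case=> [->|[->|[->|->]]]; lia.
Qed.

Lemma sq4 (u : nat) : (u^2 %% 4 = u %% 2)%N.
Proof. nia. Qed.

Lemma sq_coprime x y k : coprime x y -> x * y = k ^ 2 -> x = gcdn x k ^ 2.
Proof.
move=> cxy hk.
have h1 : gcdn x k ^ 2 = gcdn (gcdn (x * x) (x * k)) (gcdn (k * x) (k * k)).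
  by rewrite -mulnn muln_gcdl -!muln_gcdr.
have hkk : k * k = x * y by rewrite mulnn -hk.
rewrite h1 hkk [k * x]mulnC.
rewrite -!muln_gcdr.
have -> : gcdn (gcdn x k) (gcdn k y) = 1.
  apply/eqP; rewrite -dvdn1 -(eqP cxy) dvdn_gcd; apply/andP; split.
    exact: dvdn_trans (dvdn_gcdl _ _) (dvdn_gcdl _ _).
  exact: dvdn_trans (dvdn_gcdr _ _) (dvdn_gcdr _ _).
by rewrite muln1.
Qed.

Lemma split_msq (m u v k : nat) : prime m -> coprime u v -> u * v = m * k ^ 2 ->
  exists r s, (u = m * r ^ 2 /\ v = s ^ 2) \/ (u = r ^ 2 /\ v = m * s ^ 2).
Proof.
move=> pm cuv huv.
have m0 : 0 < m by exact: prime_gt0.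
have : m %| u * v by rewrite huv dvdn_mulr.
rewrite Euclid_dvdM // => /orP [/dvdnP [u' eu]|/dvdnP [v' ev]]; subst.
- have e : u' * v = k ^ 2.
    by apply/eqP; rewrite -(eqn_pmul2l m0) -huv; apply/eqP; ring.
  have c : coprime u' v.
    by apply: coprime_dvdl cuv; rewrite dvdn_mulr.
  exists (gcdn u' k), (gcdn v k); left; split.
    by rewrite mulnC -(@sq_coprime u' v k c e).
  apply: (@sq_coprime v u' k); first by rewrite coprime_sym.
  by rewrite mulnC.
- have e : u * v' = k ^ 2.
    by apply/eqP; rewrite -(eqn_pmul2l m0) -huv; apply/eqP; ring.
  have c : coprime u v'.
    by apply: coprime_dvdr cuv; rewrite dvdn_mulr.
  exists (gcdn u k), (gcdn v' k); right; split.
    exact: sq_coprime c e.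
  rewrite mulnC -(@sq_coprime v' u k) //; first by rewrite coprime_sym.
  by rewrite mulnC.
Qed.

Lemma mul1mod (d m x : nat) : m %% d = 1 -> (m * x) %% d = x %% d.
Proof. by move=> h; rewrite -modnMml h mul1n. Qed.

Lemma coprime_2 (d x : nat) : d %| x -> x %% 2 = 1 -> coprime d 2.
Proof.
move=> dx ox; rewrite coprime_sym prime_coprime //.
apply/negP => d2; have := dvdn_trans d2 dx.
rewrite /dvdn => /eqP; lia.
Qed.

Lemma t1 (m B A t : nat) : A^2 + m * B^2 = (A + t)^2 -> m * B^2 = t * (t + 2 * A).
Proof. move=> E. apply/eqP; rewrite -(eqn_add2l (A^2)) E; apply/eqP; ring. Qed.
Lemma t2 (m : nat) : 1 < m -> m ^ 2 <= m -> False.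
Proof. move=> h1 h2. nia. Qed.
Lemma t3 (m B B' t u A: nat) : m * B^2 = t * (t + 2 * A) -> B = 2 * B' -> t = 2 * u -> u * (u + A) = m * B'^2.
Proof.
move=> E hB ht. apply/eqP; rewrite -(@eqn_pmul2l 4) //; apply/eqP.
have e1 : 4 * (m * B'^2) = m * B^2 by rewrite hB; ring.
have e2 : 4 * (u*(u+A)) = t * (t + 2*A) by rewrite ht; ring.
by rewrite e1 e2 E.
Qed.

Lemma prim4 (m A B N : nat) : prime m -> m %% 8 = 1 -> coprime A B ->
  A^2 + m * B^2 = N^2 -> N %% 4 = 1.
Proof.
move=> pm m8 cAB E.
have m1 : 1 < m by exact: prime_gt1.
have m4 : m %% 4 = 1 by lia.
have hAN : A <= N.
  by rewrite -(@leq_exp2r _ _ 2) // -E leq_addr.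
have cAN : coprime A N.
  rewrite /coprime; set d := gcdn A N.
  have dA : d %| A := dvdn_gcdl _ _.
  have dN : d %| N := dvdn_gcdr _ _.
  have cdB : coprime d B := coprime_dvdl dA cAB.
  have : d^2 %| m * B^2.
    have -> : m * B^2 = N^2 - A^2 by lia.
    by apply: dvdn_sub; apply: dvdn_exp2r.
  rewrite Gauss_dvdl; last by rewrite coprimeXl // coprimeXr.
  move=> d2m.
  have dm : d %| m by apply: dvdn_trans d2m; rewrite dvdn_exp.
  have/primeP [_ Hp] := pm.
  case/orP: (Hp d dm) => // /eqP dEm.
  rewrite dEm in d2m.
  by case: (@t2 m m1 (dvdn_leq (prime_gt0 pm) d2m)).
have eN := subnKC hAN; set t := N - A in eN.
have Et : m * B^2 = t * (t + 2 * A) by apply: t1; rewrite eN.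
have sA := sq4 A; have sN := sq4 N; have sB := sq4 B.
have mB := mul1mod 4 m (B^2) m4.
have [oA|eA] : A %% 2 = 1 \/ A %% 2 = 0 by lia.
- have [oN|eN2] : N %% 2 = 1 \/ N %% 2 = 0 by lia.
  2: by lia.
  have eB : B %% 2 = 0 by lia.
  have [B' hB] : exists B', B = 2 * B' by exists (B %/ 2); lia.
  have [u hu] : exists u, t = 2 * u by exists (t %/ 2); lia.
  have Euv : u * (u + A) = m * B'^2 by exact: t3 Et hB hu.
  have cuv : coprime u (u + A).
    rewrite /coprime; set d := gcdn u (u + A).
    have du : d %| u := dvdn_gcdl _ _.
    have duA : d %| u + A := dvdn_gcdr _ _.
    have dA : d %| A by rewrite -(dvdn_addr _ du).
    have dN : d %| N by rewrite -eN hu; apply: dvdn_add => //; rewrite mulSn mul1n dvdn_add.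
    by rewrite -dvdn1 -(eqP cAN) dvdn_gcd dA dN.
  have [r [s [[h1 h2]|[h1 h2]]]] := @split_msq m _ _ _ pm cuv Euv.
  + have NE : N = m * r^2 + s^2 by rewrite -h1 -h2; lia.
    have := sq4 r; have := sq4 s; have := mul1mod 4 m (r^2) m4; lia.
  + have NE : N = r^2 + m * s^2 by rewrite -h1 -h2; lia.
    have := sq4 r; have := sq4 s; have := mul1mod 4 m (s^2) m4; lia.
- have [oN|eN2] : N %% 2 = 1 \/ N %% 2 = 0 by lia.
  + have ot : t %% 2 = 1 by lia.
    have cuv : coprime t (t + 2 * A).
      rewrite /coprime; set d := gcdn t (t + 2 * A).
      have du : d %| t := dvdn_gcdl _ _.
      have duA : d %| t + 2 * A := dvdn_gcdr _ _.
      have d2A : d %| 2 * A by rewrite -(dvdn_addr _ du).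
      have dA : d %| A by rewrite -(@Gauss_dvdr d 2 A (@coprime_2 d t du ot)).
      have dN : d %| N by rewrite -eN; apply: dvdn_add.
      by rewrite -dvdn1 -(eqP cAN) dvdn_gcd dA dN.
    have Euv : t * (t + 2 * A) = m * B^2 by [].
    have [r [s [[h1 h2]|[h1 h2]]]] := @split_msq m _ _ _ pm cuv Euv.
    * have or : r %% 2 = 1.
        have := sq4 r; have := mul1mod 4 m (r^2) m4; lia.
      have os : s %% 2 = 1.
        have := sq4 s; lia.
      have := @sq8 r or; have := @sq8 s os; have := mul1mod 8 m (r^2) m8; lia.
    * have os : s %% 2 = 1.
        have := sq4 s; have := mul1mod 4 m (s^2) m4; lia.
      have or : r %% 2 = 1.
        have := sq4 r; lia.
      have := @sq8 r or; have := @sq8 s os; have := mul1mod 8 m (s^2) m8; lia.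
  + have oB : B %% 2 = 1.
      apply/eqP; apply: contraT => hB.
      have : 2 %| gcdn A B by rewrite dvdn_gcd /dvdn; apply/andP; split; apply/eqP; lia.
      by rewrite (eqP cAB).
    lia.
Qed.

Lemma gen4 (m A B N : nat) : prime m -> m %% 8 = 1 -> 0 < N ->
  A^2 + m * B^2 = N^2 -> exists N', N = N' * gcdn A B /\ N' %% 4 = 1.
Proof.
move=> pm m8 N0 E.
set g := gcdn A B.
have g0 : 0 < g.
  rewrite gcdn_gt0 !lt0n; apply: contraT; rewrite negb_or !negbK => /andP [/eqP A0 /eqP B0].
  move: E; rewrite A0 B0; lia.
have eA := divnK (dvdn_gcdl A B); have eB := divnK (dvdn_gcdr A B).
rewrite -/g in eA eB.
set A' := A %/ g in eA; set B' := B %/ g in eB.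
have cAB : coprime A' B'.
  rewrite /coprime; apply/eqP.
  apply/eqP; rewrite -(eqn_pmul2r g0) mul1n muln_gcdl eA eB //.
have E' : N^2 = (A'^2 + m * B'^2) * g^2 by rewrite -E -eA -eB; ring.
have gN : g %| N.
  by rewrite -(@dvdn_pexp2r _ _ 2) // E' dvdn_mull.
have eN := divnK gN; set N' := N %/ g in eN.
exists N'; split; first by rewrite eN.
apply: (@prim4 m A' B' N' pm m8 cAB).
apply/eqP; rewrite -(@eqn_pmul2r (g^2)) ?expn_gt0 ?g0 //; apply/eqP.
by rewrite -expnMn eN E'.
Qed.

Local Open Scope ring_scope.


Lemma Euclidz {q x y : int} : prime `|q| -> (q %| x * y)%Z -> (q %| x)%Z \/ (q %| y)%Z.
Proof. by move=> pq; rewrite !dvdzE abszM Euclid_dvdM // => /orP. Qed.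

Lemma Euclidz_exp {q x : int} {n : nat} : prime `|q| -> (q %| x ^+ n)%Z -> (q %| x)%Z.
Proof. by move=> pq; rewrite !dvdzE abszX Euclid_dvdX // => /andP []. Qed.

Lemma primez_eq {q r : int} : 0 < q -> 0 < r -> prime `|q| -> prime `|r| -> (q %| r)%Z -> q = r.
Proof.
move=> q0 r0 pq pr; rewrite dvdzE dvdn_prime2 // => /eqP h.
by rewrite -(gtz0_abs q0) -(gtz0_abs r0) h.
Qed.

Lemma coprimez_byprime (x y : int) :
  (forall q : nat, prime q -> (q%:Z %| x)%Z -> (q%:Z %| y)%Z -> False) -> coprimez x y.
Proof.
move=> H; rewrite coprimezE /coprime; apply: contraT => hg.
have key : forall q, (q %| gcdn `|x| `|y|)%N -> prime q -> False.
  move=> q qd pq; apply: (H q pq); rewrite dvdzE /=; apply: dvdn_trans qd _;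
    [exact: dvdn_gcdl|exact: dvdn_gcdr].
have [g0|g0] := posnP (gcdn `|x| `|y|).
  by exfalso; apply: (key 2) => //; rewrite g0 dvdn0.
have g1 : (1 < gcdn `|x| `|y|)%N by rewrite ltn_neqAle eq_sym hg g0.
by exfalso; exact: (key _ (pdiv_dvd _) (pdiv_prime g1)).
Qed.

Lemma sqz4 (u : int) : (u^+2 %% 4 = u %% 2)%Z.
Proof. nia. Qed.

Lemma mulzmod (d m x : int) : (m %% d = 1)%Z -> ((m * x) %% d = x %% d)%Z.
Proof. by move=> h; rewrite -modzMml h mul1r. Qed.

Lemma sum2mod4 (u v m : int) : (m %% 4 = 1)%Z -> ((u^+2 + m * v^+2) %% 4 <> 3)%Z.
Proof. move=> h; have := sqz4 u; have := sqz4 v; have := @mulzmod 4 m (v^+2) h; lia. Qed.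

Lemma natsq (A B N m : int) : 0 <= m -> A^+2 + m * B^+2 = N^+2 ->
  (`|A|^2 + `|m| * `|B|^2 = `|N|^2)%N.
Proof.
move=> m0 E.
apply/eqP; rewrite -(eqr_nat int) natrD natrM.
rewrite -!abszX !natz !abszE !ger0_norm ?sqr_ge0 //.
by rewrite E.
Qed.

Lemma test1 (m : int) : 0 < m -> (m %% 8 = 1)%Z -> (`|m| %% 8 = 1)%N.
Proof. move=> *; lia. Qed.

Lemma mod84 {m : int} : (m %% 8 = 1)%Z -> (m %% 4 = 1)%Z.
Proof. lia. Qed.
Lemma sq_odd4 {al : int} : (al %% 4 = 3)%Z -> (al^+2 %% 4 = 1)%Z.
Proof. rewrite sqz4; lia. Qed.
Lemma absmod {m : int} {d r : nat} : 0 < m -> (m %% d = r)%Z -> (`|m| %% d = r)%N.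
Proof. by move=> m0; rewrite -{1}(gtz0_abs m0) modz_nat => -[]. Qed.

Lemma main_int (al be ga a b p m X Y Z : int) :
  p = al ^+ 2 * a ^+ 2 + 2 * be * a * b + ga * b ^+ 2 ->
  m = al ^+ 2 * ga - be ^+ 2 ->
  zprime p -> zprime m -> (m %% 8)%Z = 1 -> zprime al -> (al %% 4)%Z = 3 ->
  coprimez X Y -> X != 0 -> p * X ^+ 4 - m * Y ^+ 4 = Z ^+ 2 -> False.
Proof.
move=> hp hm /andP [p0 pp] /andP [m0 pm] m8 /andP [al0 pal] al4 cXY X0 E.
have m4 := mod84 m8.
set c := al^+2 * a + be * b.
have F1 : al^+2 * p = c^+2 + m * b^+2 by rewrite hp hm /c; ring.
have pNal : p != al.
  apply/eqP => hpa; move: F1; rewrite hpa => F.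
  have h2 := sq_odd4 al4.
  have := @mulzmod 4 _ al h2; rewrite F al4; exact: sum2mod4 m4.
have alnbe : ~~ (al %| be)%Z.
  apply/negP => /dvdzP [k hk].
  have : (al^+2 %| m)%Z by rewrite hm hk; apply/dvdzP; exists (ga - k^+2); ring.
  rewrite dvdzE abszX => h.
  have h1 : (`|al| %| `|m|)%N by apply: dvdn_trans h; rewrite dvdn_exp.
  rewrite dvdn_prime2 // in h1; move/eqP: h1 => h1; rewrite h1 in h.
  exact: (@t2 `|m| (prime_gt1 pm) (dvdn_leq (prime_gt0 pm) h)).
have alnb : ~~ (al %| b)%Z.
  apply/negP => /dvdzP [k hk].
  have : (al %| p)%Z.
    by rewrite hp hk; apply/dvdzP; exists (al * a^+2 + 2 * be * a * k + ga * k^+2 * al); ring.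
  move/(primez_eq al0 p0 pal pp) => h; by rewrite h eqxx in pNal.
have pn0 : p != 0 := lt0r_neq0 p0.
have pnb : ~~ (p %| b)%Z.
  apply/negP => pb.
  have pc2 : (p %| c^+2)%Z.
    have -> : c^+2 = al^+2 * p - m * b^+2 by rewrite F1; ring.
    by apply: rpredB; apply: dvdz_mull; [exact: dvdzz | exact: dvdz_exp].
  have pc := Euclidz_exp pp pc2.
  have : (p * p %| al^+2 * p)%Z.
    rewrite F1 !expr2; apply: rpredD; first exact: dvdz_mul.
    by apply: dvdz_mull; exact: dvdz_mul.
  rewrite dvdz_mul2r // => /(Euclidz_exp pp) /(primez_eq p0 al0 pp pal) h.
  by rewrite h eqxx in pNal.
have cZY : coprimez Z Y.
  apply: coprimez_byprime => q pq qZ qY.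
  have q0 : 0 < q%:Z by rewrite ltz_nat prime_gt0.
  have pq' : prime `|q%:Z| by [].
  have qX : ~~ (q%:Z %| X)%Z.
    apply/negP => qX; move: cXY; rewrite coprimezE /coprime => /eqP g1.
    have : (q %| gcdn `|X| `|Y|)%N by rewrite dvdn_gcd -!(dvdzE q%:Z) qX qY.
    by rewrite g1 dvdn1 => /eqP h1; move: (prime_gt1 pq); rewrite h1.
  have qpX : (q%:Z %| p * X^+4)%Z.
    have -> : p * X^+4 = Z^+2 + m * Y^+4 by rewrite -E; ring.
    by apply: rpredD; [exact: dvdz_exp | apply: dvdz_mull; exact: dvdz_exp].
  case: (Euclidz pq' qpX) => [qp | /(Euclidz_exp pq') qX']; last by rewrite qX' in qX.
  have qp' := primez_eq q0 p0 pq' pp qp.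
  rewrite qp' in qZ qY qX.
  have : (p * p %| p * X^+4)%Z.
    have -> : p * X^+4 = Z^+2 + m * (Y^+2 * Y^+2) by rewrite -E; ring.
    rewrite !expr2; apply: rpredD; first exact: dvdz_mul.
    apply: dvdz_mull; apply: dvdz_mul; exact: dvdz_mulr.
  rewrite dvdz_mul2l // => /(Euclidz_exp pp) h.
  by rewrite h in qX.
have hid : (b * Z - c * Y^+2) * (b * Z + c * Y^+2) = p * (b^+2 * X^+4 - al^+2 * Y^+4).
  transitivity (b^+2 * Z^+2 - c^+2 * Y^+4); first by ring.
  rewrite -E. have -> : c^+2 = al^+2 * p - m * b^+2 by rewrite F1; ring.
  ring.
have [eps [heps pB0]] : exists eps : int, eps^+2 = 1 /\ (p %| b * Z - eps * c * Y^+2)%Z.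
  have : (p %| (b * Z - c * Y^+2) * (b * Z + c * Y^+2))%Z by rewrite hid dvdz_mulr ?dvdzz.
  case/(Euclidz pp) => h; [exists 1 | exists (-1)]; split.
  - by rewrite expr1n.
  - by rewrite mul1r.
  - by rewrite sqrrN expr1n.
  - by have -> : b * Z - (-1) * c * Y^+2 = b * Z + c * Y^+2 by ring.
set c' := eps * c.
have F2 : c'^+2 + m * b^+2 = al^+2 * p by rewrite /c' exprMn heps mul1r F1.
set A := c' * Z + m * b * Y^+2.
set B := c' * Y^+2 - b * Z.
have pB : (p %| B)%Z.
  have -> : B = - (b * Z - eps * c * Y^+2) by rewrite /B /c'; ring.
  by rewrite rpredN.
have pA : (p %| A)%Z.
  have : (p %| A * b)%Z.
    have -> : A * b = c' * (b * Z - eps * c * Y^+2) + (c'^+2 + m * b^+2) * Y^+2.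
      by rewrite /A /c'; ring.
    rewrite F2; apply: rpredD; first exact: dvdz_mull.
    by apply: dvdz_mulr; apply: dvdz_mull; exact: dvdzz.
  by case/(Euclidz pp) => // h; rewrite h in pnb.
case/dvdzP: pA => A1 hA1.
case/dvdzP: pB => B1 hB1.
have I1 : A1^+2 + m * B1^+2 = (al * X^+2)^+2.
  apply: (mulIf (expf_neq0 2 pn0)).
  transitivity (A^+2 + m * B^+2); first by rewrite hA1 hB1; ring.
  transitivity ((c'^+2 + m * b^+2) * (Z^+2 + m * (Y^+2)^+2)); first by rewrite /A /B; ring.
  rewrite F2 -E; ring.
have I2 : c' * A1 - m * b * B1 = al^+2 * Z.
  apply: (mulIf pn0).
  transitivity (c' * A - m * b * B); first by rewrite hA1 hB1; ring.
  transitivity ((c'^+2 + m * b^+2) * Z); first by rewrite /A /B; ring.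
  by rewrite F2; ring.
have I3 : b * A1 + c' * B1 = al^+2 * Y^+2.
  apply: (mulIf pn0).
  transitivity (b * A + c' * B); first by rewrite hA1 hB1; ring.
  transitivity ((c'^+2 + m * b^+2) * Y^+2); first by rewrite /A /B; ring.
  by rewrite F2; ring.
have gal : (gcdz A1 B1 %| al^+2)%Z.
  have gA : (gcdz A1 B1 %| A1)%Z := dvdz_gcdl _ _.
  have gB : (gcdz A1 B1 %| B1)%Z := dvdz_gcdr _ _.
  have g1 : (gcdz A1 B1 %| al^+2 * Z)%Z by rewrite -I2; apply: rpredB; apply: dvdz_mull.
  have g2 : (gcdz A1 B1 %| al^+2 * Y^+2)%Z by rewrite -I3; apply: rpredD; apply: dvdz_mull.
  have cZY2 : coprimez Z (Y^+2) := coprimezXr 2 cZY.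
  case/coprimezP: cZY2 => [[u v]] /= huv.
  have -> : al^+2 = u * (al^+2 * Z) + v * (al^+2 * Y^+2).
    by rewrite -[LHS]mulr1 -huv; ring.
  by apply: rpredD; apply: dvdz_mull.
set alN := `|al|%N.
have gN : (gcdn `|A1| `|B1| %| alN ^ 2)%N by move: gal; rewrite dvdzE abszX.
case/(dvdn_pfactor _ _ pal): gN => k k2 hk.
have N0 : (0 < alN * `|X|^2)%N.
  by rewrite muln_gt0 prime_gt0 //= expn_gt0 absz_gt0 X0.
have E' := @natsq _ _ _ m (ltW m0) I1.
rewrite abszM abszX in E'.
have m8N : (`|m| %% 8 = 1)%N := absmod m0 m8.
have al4N : (alN %% 4 = 3)%N := absmod al0 al4.
have [N' [hN' N4]] := @gen4 _ _ _ _ pm m8N N0 E'.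
have Q : forall x : nat, ((alN * x^2) %% 4 <> 1)%N.
  move=> x; have h := (@modnMml alN (x^2) 4); rewrite al4N in h.
  have := sq4 x; clear -h; lia.
have : (k = 0 \/ k = 1 \/ k = 2)%N by clear -k2; lia.
case=> [k0|[k1|k2']]; subst k.
- rewrite hk expn0 muln1 in hN'.
  by apply: (Q `|X|%N); rewrite hN'.
- rewrite expn1 in hk.
  have aA1 : (al %| A1)%Z by rewrite dvdzE; have := dvdn_gcdl `|A1| `|B1|; rewrite hk.
  have aB1 : (al %| B1)%Z by rewrite dvdzE; have := dvdn_gcdr `|A1| `|B1|; rewrite hk.
  have aB : (al %| B)%Z by rewrite hB1; apply: dvdz_mulr.
  set W := Z - eps * be * Y^+2.
  set W' := Z + eps * be * Y^+2.
  have hBW : B = eps * al^+2 * a * Y^+2 - b * W by rewrite /B /c' /c /W; ring.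
  have aW : (al %| W)%Z.
    have : (al %| b * W)%Z.
      have -> : b * W = eps * al^+2 * a * Y^+2 - B by rewrite hBW; ring.
      apply: rpredB => //; apply/dvdzP; exists (eps * al * a * Y^+2); ring.
    by case/(Euclidz pal) => // h; rewrite h in alnb.
  have hWW : W * W' = p * X^+4 - al^+2 * ga * Y^+4.
    transitivity (Z^+2 - eps^+2 * be^+2 * Y^+4); first by rewrite /W /W'; ring.
    by rewrite heps -E hm; ring.
  have aX : (al %| X)%Z.
    have : (al %| p * X^+4)%Z.
      have -> : p * X^+4 = W * W' + al^+2 * ga * Y^+4 by rewrite hWW; ring.
      apply: rpredD; first exact: dvdz_mulr.
      by apply/dvdzP; exists (al * ga * Y^+4); ring.
    case/(Euclidz pal) => [h|]; last exact: Euclidz_exp pal.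
    by have h' := primez_eq al0 p0 pal pp h; rewrite h' eqxx in pNal.
  have naY : ~~ (al %| Y)%Z.
    apply/negP => aY; move: cXY; rewrite coprimezE /coprime => /eqP g1.
    have : (`|al| %| gcdn `|X| `|Y|)%N by rewrite dvdn_gcd -!dvdzE aX aY.
    by rewrite g1 dvdn1 => /eqP h1; move: (prime_gt1 pal); rewrite h1.
  have eps1 : eps = 1 \/ eps = -1.
    by move/eqP: heps; rewrite sqrf_eq1 => /orP [/eqP ->|/eqP ->]; [left|right].
  have naW' : ~~ (al %| W')%Z.
    apply/negP => aW'.
    have a2Z : (al %| 2 * Z)%Z.
      have -> : 2 * Z = W + W' by rewrite /W /W'; ring.
      exact: rpredD.
    case/(Euclidz pal): a2Z => [a2|aZ].
      move: a2; rewrite dvdzE => a2.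
      have h : (alN <= 2)%N by apply: (dvdn_leq _ a2).
      have : (alN %% 4 = 3)%N := al4N.
      rewrite -/alN in h; clear -h; lia.
    have : (al %| eps * be * Y^+2)%Z.
      have -> : eps * be * Y^+2 = W' - Z by rewrite /W'; ring.
      exact: rpredB.
    case/(Euclidz pal) => [h|/(Euclidz_exp pal) aY]; last by rewrite aY in naY.
    case/(Euclidz pal): h => [ae|abe]; last by rewrite abe in alnbe.
    move: ae; rewrite dvdzE; case: eps1 => -> /=; rewrite dvdn1 => /eqP h1;
      by move: (prime_gt1 pal); rewrite h1.
  have a2W : (al^+2 %| W)%Z.
    have c2 : coprimez (al^+2) W'.
      by rewrite coprimez_pexpl // coprimezE prime_coprime // -dvdzE.
    rewrite -(Gauss_dvdzl W c2) hWW.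
    apply: rpredB; last by apply/dvdzP; exists (ga * Y^+4); ring.
    case/dvdzP: aX => x' ->.
    by apply/dvdzP; exists (p * x'^+4 * al^+2); ring.
  have a2A : (al^+2 %| A)%Z.
    have -> : A = al^+2 * (eps * a * Z + ga * b * Y^+2) + eps * be * b * W
                  + be^+2 * b * Y^+2 * (eps^+2 - 1).
      by rewrite /A /c' /c /W hm; ring.
    rewrite heps subrr mulr0 addr0.
    apply: rpredD; first exact: dvdz_mulr (dvdzz _).
    exact: dvdz_mull a2W.
  have a2B : (al^+2 %| B)%Z.
    rewrite hBW; apply: rpredB; last exact: dvdz_mull a2W.
    by apply/dvdzP; exists (eps * a * Y^+2); ring.
  have cap : coprimez (al^+2) p.
    rewrite coprimez_pexpl // coprimezE prime_coprime // -dvdzE.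
    apply/negP => h; have h' := primez_eq al0 p0 pal pp h.
    by rewrite h' eqxx in pNal.
  have a2A1 : (al^+2 %| A1)%Z by move: a2A; rewrite hA1 Gauss_dvdzl.
  have a2B1 : (al^+2 %| B1)%Z by move: a2B; rewrite hB1 Gauss_dvdzl.
  have : (alN ^ 2 %| gcdn `|A1| `|B1|)%N.
    by rewrite dvdn_gcd -!abszX -!dvdzE a2A1 a2B1.
  rewrite hk => h.
  exact: (@t2 alN (prime_gt1 pal) (dvdn_leq (prime_gt0 pal) h)).
- have e1 : (`|X|^2 = N' * alN)%N.
    apply/eqP; rewrite -(eqn_pmul2l (prime_gt0 pal)); apply/eqP.
    rewrite hN' hk; ring.
  have hd : (alN %| `|X|^2)%N by rewrite e1 dvdn_mull.
  move: hd; rewrite Euclid_dvdX // => /andP [/dvdnP [x' hx'] _].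
  have e2 : (N' = alN * x'^2)%N.
    apply/eqP; rewrite -(@eqn_pmul2r alN) ?prime_gt0 //; apply/eqP.
    rewrite -e1 hx'; ring.
  by apply: (Q x'); rewrite -e2.
Qed.

Definition det3 (u v w : rat * rat * rat) : rat :=
  u.1.1 * (v.1.2 * w.2 - v.2 * w.1.2) - u.1.2 * (v.1.1 * w.2 - v.2 * w.1.1)
  + u.2 * (v.1.1 * w.1.2 - v.1.2 * w.1.1).

Definition bil (p m : rat) (u v : rat * rat * rat) : rat :=
  p * u.1.1 * v.1.1 - m * u.1.2 * v.1.2 - u.2 * v.2.

Definition dir (E F : rat * rat * rat) (t : rat) : rat * rat * rat :=
  (E.1.1 + t * F.1.1, E.1.2 + t * F.1.2, E.2 + t * F.2).

Definition pt (p m : rat) (P0 E F : rat * rat * rat) (t : rat) : rat * rat * rat :=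
  let D := dir E F t in
  let s := bil p m D D in
  let be := bil p m P0 D in
  (s * P0.1.1 - 2 * be * D.1.1, s * P0.1.2 - 2 * be * D.1.2, s * P0.2 - 2 * be * D.2).

Lemma pt_conic p m P0 E F t : p * P0.1.1^+2 - m * P0.1.2^+2 = P0.2^+2 ->
  let u := pt p m P0 E F t in p * u.1.1^+2 - m * u.1.2^+2 = u.2^+2.
Proof.
case: P0 => [[a0 b0] c0]; case: E => [[e1 e2] e3]; case: F => [[f1 f2] f3] /= h.
apply/eqP; rewrite -subr_eq0; apply/eqP.
rewrite /pt /bil /dir /=.
set d1 := e1 + t * f1; set d2 := e2 + t * f2; set d3 := e3 + t * f3.
have -> : forall X Y Z : rat, X - Y - Z = X - Y - Z by [].
transitivity ((p * d1 * d1 - m * d2 * d2 - d3 * d3)^+2 * (p * a0^+2 - m * b0^+2 - c0^+2)).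
  ring.
by rewrite h subrr mulr0.
Qed.

Lemma det_pt_self p m P0 E F t : det3 P0 (dir E F t) (pt p m P0 E F t) = 0.
Proof.
case: P0 => [[a0 b0] c0]; case: E => [[e1 e2] e3]; case: F => [[f1 f2] f3].
rewrite /det3 /pt /dir /bil /=; ring.
Qed.

Lemma det_pt_other p m P0 E F s t :
  det3 P0 (dir E F s) (pt p m P0 E F t) =
  - 2 * bil p m P0 (dir E F t) * (t - s) * det3 P0 E F.
Proof.
case: P0 => [[a0 b0] c0]; case: E => [[e1 e2] e3]; case: F => [[f1 f2] f3].
rewrite /det3 /pt /dir /bil /=; ring.
Qed.

Lemma det_pt_F p m P0 E F t :
  2 * bil p m P0 (dir E F t) * det3 P0 E F = - det3 P0 (pt p m P0 E F t) F.
Proof.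
case: P0 => [[a0 b0] c0]; case: E => [[e1 e2] e3]; case: F => [[f1 f2] f3].
rewrite /det3 /pt /dir /bil /=; ring.
Qed.

Lemma bil_dir p m P0 E F t : bil p m P0 (dir E F t) = bil p m P0 E + t * bil p m P0 F.
Proof.
case: P0 => [[a0 b0] c0]; case: E => [[e1 e2] e3]; case: F => [[f1 f2] f3].
rewrite /pt /dir /bil /=; ring.
Qed.

Lemma cramer (l P0 E F : rat * rat * rat) :
  det3 P0 E F * l.1.1 = (l.1.1 * P0.1.1 + l.1.2 * P0.1.2 + l.2 * P0.2) * (E.1.2 * F.2 - E.2 * F.1.2)
    - (l.1.1 * E.1.1 + l.1.2 * E.1.2 + l.2 * E.2) * (P0.1.2 * F.2 - P0.2 * F.1.2)
    + (l.1.1 * F.1.1 + l.1.2 * F.1.2 + l.2 * F.2) * (P0.1.2 * E.2 - P0.2 * E.1.2)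
  /\
  det3 P0 E F * l.1.2 = - (l.1.1 * P0.1.1 + l.1.2 * P0.1.2 + l.2 * P0.2) * (E.1.1 * F.2 - E.2 * F.1.1)
    + (l.1.1 * E.1.1 + l.1.2 * E.1.2 + l.2 * E.2) * (P0.1.1 * F.2 - P0.2 * F.1.1)
    - (l.1.1 * F.1.1 + l.1.2 * F.1.2 + l.2 * F.2) * (P0.1.1 * E.2 - P0.2 * E.1.1)
  /\
  det3 P0 E F * l.2 = (l.1.1 * P0.1.1 + l.1.2 * P0.1.2 + l.2 * P0.2) * (E.1.1 * F.1.2 - E.1.2 * F.1.1)
    - (l.1.1 * E.1.1 + l.1.2 * E.1.2 + l.2 * E.2) * (P0.1.1 * F.1.2 - P0.1.2 * F.1.1)
    + (l.1.1 * F.1.1 + l.1.2 * F.1.2 + l.2 * F.2) * (P0.1.1 * E.1.2 - P0.1.2 * E.1.1).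
Proof.
case: l => [[l1 l2] l3]; case: P0 => [[a0 b0] c0]; case: E => [[e1 e2] e3]; case: F => [[f1 f2] f3].
rewrite /det3 /=; split; [|split]; ring.
Qed.

Lemma family (p m : rat) (P0 E F : rat * rat * rat) : p != 0 -> m != 0 ->
  p * P0.1.1^+2 - m * P0.1.2^+2 = P0.2^+2 -> det3 P0 E F != 0 ->
  exists f : nat -> rat * rat * rat,
    (forall n, nonzero3 (f n) /\ p * (f n).1.1^+2 - m * (f n).1.2^+2 = (f n).2^+2) /\
    (forall i j, i <> j -> ~ proportional (f i) (f j)).
Proof.
move=> p0 m0 hQ hdet.
have hb : (bil p m P0 E != 0) || (bil p m P0 F != 0).
  apply: contraT; rewrite negb_or !negbK => /andP [/eqP hE /eqP hF].
  move: hdet hQ hE hF.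
  case: P0 => [[a0 b0] c0]; case: E => [[e1 e2] e3]; case: F => [[f1 f2] f3].
  rewrite /bil /det3 /= => hdet hQ hE hF.
  set d := (X in X != 0) in hdet.
  have Q0 : p * a0 * a0 - m * b0 * b0 - c0 * c0 = 0 by rewrite -[c0 * c0]expr2 -hQ; ring.
  have k1 : d * (p * a0) = 0.
    transitivity ((p * a0 * a0 - m * b0 * b0 - c0 * c0) * (e2 * f3 - e3 * f2)
      - (p * a0 * e1 - m * b0 * e2 - c0 * e3) * (b0 * f3 - c0 * f2)
      + (p * a0 * f1 - m * b0 * f2 - c0 * f3) * (b0 * e3 - c0 * e2)).
      by rewrite /d; ring.
    by rewrite Q0 hE hF; ring.
  have k2 : d * (m * b0) = 0.
    transitivity (((p * a0 * a0 - m * b0 * b0 - c0 * c0) * (e1 * f3 - e3 * f1)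
      - (p * a0 * e1 - m * b0 * e2 - c0 * e3) * (a0 * f3 - c0 * f1)
      + (p * a0 * f1 - m * b0 * f2 - c0 * f3) * (a0 * e3 - c0 * e1))).
      by rewrite /d; ring.
    by rewrite Q0 hE hF; ring.
  have k3 : d * c0 = 0.
    transitivity (- ((p * a0 * a0 - m * b0 * b0 - c0 * c0) * (e1 * f2 - e2 * f1)
      - (p * a0 * e1 - m * b0 * e2 - c0 * e3) * (a0 * f2 - b0 * f1)
      + (p * a0 * f1 - m * b0 * f2 - c0 * f3) * (a0 * e2 - b0 * e1))).
      by rewrite /d; ring.
    by rewrite Q0 hE hF; ring.
  move/eqP: k1; rewrite !mulf_eq0 (negPf hdet) (negPf p0) /= => /eqP a00.
  move/eqP: k2; rewrite !mulf_eq0 (negPf hdet) (negPf m0) /= => /eqP b00.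
  move/eqP: k3; rewrite !mulf_eq0 (negPf hdet) /= => /eqP c00.
  have d0 : d = 0 by rewrite /d a00 b00 c00; ring.
  by rewrite d0 eqxx in hdet.
set bE := bil p m P0 E; set bF := bil p m P0 F.
set r := - bE / bF.
pose t (n : nat) : rat := n%:R + 1 + `|r|.
have tinj : forall i j, t i = t j -> i = j.
  move=> i j; rewrite /t => /addIr /addIr /eqP; rewrite eqr_nat => /eqP.
  done.
have ht : forall n, bil p m P0 (dir E F (t n)) != 0.
  move=> n; rewrite bil_dir -/bE -/bF.
  have [hF|hF] := eqVneq bF 0.
    by rewrite hF mulr0 addr0; move: hb; rewrite -/bE -/bF hF eqxx orbF.
  apply/eqP => h0.
  have htr : t n = r.
    rewrite /r; apply: (mulIf hF); rewrite divfK //.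
    by apply/eqP; rewrite -addr_eq0 addrC h0.
  have : r < t n.
    rewrite /t; have := ler_norm r; have : (0 <= (n%:R : rat)) by rewrite ler0n.
    lra.
  by rewrite htr ltxx.
exists (fun n => pt p m P0 E F (t n)); split.
  move=> n; split; last exact: pt_conic.
  move=> [h1 [h2 h3]].
  have hz : det3 P0 (pt p m P0 E F (t n)) F = 0 by rewrite /det3 h1 h2 h3; ring.
  have := det_pt_F p m P0 E F (t n); rewrite hz oppr0 => /eqP.
  by rewrite !mulf_eq0 (negPf (ht n)) (negPf hdet) /=.
move=> i j hij [l [h1 [h2 h3]]].
have e : det3 P0 (dir E F (t i)) (pt p m P0 E F (t j)) =
         l * det3 P0 (dir E F (t i)) (pt p m P0 E F (t i)).
  by rewrite /det3 h1 h2 h3; ring.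
move: e; rewrite det_pt_self mulr0 det_pt_other => /eqP.
rewrite !mulf_eq0 (negPf (ht j)) (negPf hdet) /= orbF subr_eq0 => /eqP /tinj h.
by apply: hij; rewrite h.
Qed.

Lemma conic_inf (p m : rat) (P0 : rat * rat * rat) : p != 0 -> m != 0 -> nonzero3 P0 ->
  p * P0.1.1^+2 - m * P0.1.2^+2 = P0.2^+2 ->
  exists f : nat -> rat * rat * rat,
    (forall n, nonzero3 (f n) /\ p * (f n).1.1^+2 - m * (f n).1.2^+2 = (f n).2^+2) /\
    (forall i j, i <> j -> ~ proportional (f i) (f j)).
Proof.
move=> p0 m0 nz hQ.
have [ha|ha] := eqVneq P0.1.1 0; last first.
  apply: (@family p m P0 (0, 1, 0) (0, 0, 1)) => //.
  have -> : det3 P0 (0, 1, 0) (0, 0, 1) = P0.1.1 by rewrite /det3 /=; ring.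
  exact: ha.
have [hb|hb] := eqVneq P0.1.2 0; last first.
  apply: (@family p m P0 (0, 0, 1) (1, 0, 0)) => //.
  have -> : det3 P0 (0, 0, 1) (1, 0, 0) = P0.1.2 by rewrite /det3 /=; ring.
  exact: hb.
have [hc|hc] := eqVneq P0.2 0; last first.
  apply: (@family p m P0 (1, 0, 0) (0, 1, 0)) => //.
  have -> : det3 P0 (1, 0, 0) (0, 1, 0) = P0.2 by rewrite /det3 /=; ring.
  exact: hc.
by case: nz.
Qed.

Lemma intrX (n : nat) (x : int) : ((x ^+ n)%:~R : rat) = (x%:~R) ^+ n.
Proof. by elim: n => [|n IH]; rewrite ?expr0 // !exprS intrM IH. Qed.

Lemma to_int (p m : int) (x y z : rat) : p%:~R * x^+4 - m%:~R * y^+4 = z^+2 -> x != 0 ->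
  exists Xi Yi Zi : int, Xi != 0 /\ p * Xi^+4 - m * Yi^+4 = Zi^+2.
Proof.
move=> Ex x0.
exists (numq x * (denq y * denq z)), (numq y * (denq x * denq z)),
  (numq z * (denq x * denq y) * (denq x * denq y * denq z)); split.
  by rewrite !mulf_eq0 numq_eq0 (negPf x0) !(negPf (denq_neq0 _)).
apply: (@intr_inj rat).
rewrite !intrB !intrM !numqE.
set dx := (denq x)%:~R : rat; set dy := (denq y)%:~R : rat; set dz := (denq z)%:~R : rat.
transitivity ((dx * dy * dz)^+4 * (p%:~R * x^+4 - m%:~R * y^+4)); first by ring.
by rewrite Ex; ring.
Qed.

Lemma reduce (p m Xi Yi Zi : int) : Xi != 0 -> p * Xi^+4 - m * Yi^+4 = Zi^+2 ->
  exists X Y Z : int, coprimez X Y /\ X != 0 /\ p * X^+4 - m * Y^+4 = Z^+2.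
Proof.
move=> X0 E.
set G := gcdz Xi Yi.
have G0 : G != 0 by rewrite /G gcdz_eq0 negb_and X0.
case/dvdzP: (dvdz_gcdl Xi Yi) => X hX.
case/dvdzP: (dvdz_gcdr Xi Yi) => Y hY.
rewrite -/G in hX hY.
have E2 : Zi^+2 = (G^+2)^+2 * (p * X^+4 - m * Y^+4) by rewrite -E hX hY; ring.
have : ((G^+2)^+2 %| Zi^+2)%Z by rewrite E2 dvdz_mulr.
rewrite dvdz_pexp2r // => /dvdzP [Z hZ].
exists X, Y, Z; split; [|split].
- apply: coprimez_byprime => q pq qX qY.
  have : (q%:Z * G %| gcdz Xi Yi)%Z.
    rewrite dvdz_gcd; apply/andP; split; [rewrite hX|rewrite hY];
      apply: dvdz_mul => //; exact: dvdzz.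
  rewrite -/G.
  rewrite -[X in (_ %| X)%Z]mul1r dvdz_mul2r // dvdz1 /= => /eqP q1.
  by move: (prime_gt1 pq); rewrite q1.
- by apply: contraNneq X0 => h; rewrite hX h mul0r.
- apply: (mulfI (expf_neq0 4 G0)).
  transitivity (Zi^+2); last by rewrite hZ; ring.
  by rewrite E2; ring.
Qed.

Theorem theorem3 (alpha beta gamma a b p m : int)
  (hp : p = alpha ^+ 2 * a ^+ 2 + 2 * beta * a * b + gamma * b ^+ 2)
  (hpprime : zprime p)
  (hm : m = alpha ^+ 2 * gamma - beta ^+ 2) :
  (* (i) *)
  (on_conic p m (alpha%:~R, b%:~R, (alpha ^+ 2 * a + beta * b)%:~R)
   /\ nonzero3 (alpha%:~R, b%:~R, (alpha ^+ 2 * a + beta * b)%:~R)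
   /\ (m != 0 -> infinitely_many_points p m))
  /\
  (* (ii) *)
  (zprime m -> (m %% 8)%Z = 1 -> zprime alpha -> (alpha %% 4)%Z = 3 ->
   forall x y z : rat,
     p%:~R * x ^+ 4 - m%:~R * y ^+ 4 = z ^+ 2 -> x = 0 /\ y = 0 /\ z = 0).
Proof.
have p0 : 0 < p by case/andP: hpprime.
have nz : nonzero3 (alpha%:~R, b%:~R, (alpha ^+ 2 * a + beta * b)%:~R).
  move=> [h1 [h2 _]]; rewrite /= in h1 h2.
  have a0 : alpha = 0 by apply: (@intr_inj rat); rewrite h1 mulr0z.
  have b0 : b = 0 by apply: (@intr_inj rat); rewrite h2 mulr0z.
  by move: p0; rewrite hp a0 b0; rewrite !expr2 !mul0r !mulr0 !addr0 ltxx.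
have onc : on_conic p m (alpha%:~R, b%:~R, (alpha ^+ 2 * a + beta * b)%:~R).
  have hint : p * alpha^+2 - m * b^+2 = (alpha^+2 * a + beta * b)^+2 by rewrite hp hm; ring.
  by rewrite /on_conic /= -!intrX -!intrM -intrB hint.
split; [split; [exact: onc | split; [exact: nz |]] |].
  move=> m0; rewrite /infinitely_many_points /on_conic.
  apply: conic_inf.
  - by rewrite intr_eq0 gt_eqF.
  - by rewrite intr_eq0.
  - exact: nz.
  - exact: onc.
move=> Pm m8 Pal al4 x y z Ex.
have [x0|x0] := eqVneq x 0.
  subst x; move: Ex; rewrite expr0n /= mulr0 sub0r => Ex.
  have hm0 : 0 < (m%:~R : rat) by rewrite ltr0z; case/andP: Pm.
  have y4 : 0 <= y^+4 by rewrite -[4%N]/(2 * 2)%N exprM sqr_ge0.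
  have h2 : 0 <= m%:~R * y^+4 := mulr_ge0 (ltW hm0) y4.
  have h3 : 0 <= z^+2 := sqr_ge0 z.
  have hz : z^+2 = 0 by lra.
  have hy : m%:~R * y^+4 = 0 by lra.
  split => //; split.
    by move/eqP: hy; rewrite mulf_eq0 (gt_eqF hm0) /= expf_eq0 /= => /eqP.
  by move/eqP: hz; rewrite sqrf_eq0 => /eqP.
have [Xi [Yi [Zi [Xi0 Ei]]]] := @to_int _ _ _ _ _ Ex x0.
have [X [Y [Z [c [X0 E]]]]] := @reduce _ _ _ _ _ Xi0 Ei.
by case: (@main_int _ _ _ _ _ _ _ _ _ _ hp hm hpprime Pm m8 Pal al4 c X0 E).
Qed.
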